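(* Let $E$ be a directed graph and let the graph inverse semigroup $G(E)$ carry a Hausdorff topology making it a topological semigroup. Then $G(E)$ embeds (as a subsemigroup and topological subspace) into a compact topological semigroup $S$ if and only if $G(E)$ is compact.
   Context: All spaces are Hausdorff. A directed graph $E=(E^0,E^1,r,s)$ has vertices $E^0$, edges $E^1$, and source/range maps $s,r:E^1\to E^0$; paths are vertices and sequences of edges $e_1\ldots e_n$ with $r(e_i)=s(e_{i+1})$. The graph inverse semigroup $G(E)$ is the semigroup with zero $0$ generated by $E^0$, $E^1$, $E^{-1}=\{e^{-1}\mid e\in E^1\}$ subject to: for $a,b\in E^0$, $e,f\in E^1$: $ab=a$ if $a=b$, else $0$; $s(e)e=er(e)=e$; $e^{-1}s(e)=r(e)e^{-1}=e^{-1}$; $e^{-1}f=r(e)$ if $e=f$, else $0$. Non-zero elements are uniquely $uv^{-1}$ with $u,v$ paths and $r(u)=r(v)$. *)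

(* Defs.v *)
From Stdlib Require Import List ClassicalEpsilon.
Import ListNotations.
Set Implicit Arguments.

Section GraphInverseSemigroup.
Variables (V Ed : Type) (s r : Ed -> V).

(* A path is a pair (x, [e1;...;en]): the vertex x when n = 0, otherwise the
   edge sequence e1...en starting at x = s(e1).  *)
Definition path := (V * list Ed)%type.

Fixpoint walk (x : V) (l : list Ed) : Prop :=
  match l with [] => True | e :: l' => s e = x /\ walk (r e) l' end.

Fixpoint rngf (x : V) (l : list Ed) : V :=
  match l with [] => x | e :: l' => rngf (r e) l' end.

Definition valid_path (p : path) : Prop := walk (fst p) (snd p).
Definition rng (p : path) : V := rngf (fst p) (snd p).

(* raw elements: None = 0, Some (u, v) = u v^{-1} *)
Definition raw := option (path * path).

Definition valid_raw (a : raw) : Prop :=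
  match a with
  | None => True
  | Some (u, v) => valid_path u /\ valid_path v /\ rng u = rng v
  end.

Definition prefix (v w : path) : Prop :=
  fst v = fst w /\ exists p, snd w = snd v ++ p.

Definition dec (P : Prop) : bool :=
  if excluded_middle_informative P then true else false.

(* (u v^{-1}) (w z^{-1}) =  u p z^{-1}       if w = v p,
                            u (z q)^{-1}     if v = w q,
                            0                otherwise. *)
Definition mulraw (a b : raw) : raw :=
  match a, b with
  | Some (u, v), Some (w, z) =>
      if dec (prefix v w) then
        Some ((fst u, snd u ++ skipn (length (snd v)) (snd w)), z)
      else if dec (prefix w v) then
        Some (u, (fst z, snd z ++ skipn (length (snd w)) (snd v)))
      else None
  | _, _ => None
  end.

Lemma walk_app x l1 l2 : walk x (l1 ++ l2) <-> walk x l1 /\ walk (rngf x l1) l2.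
Proof.
  revert x; induction l1 as [|e l1 IH]; intro x; simpl.
  - tauto.
  - rewrite IH; tauto.
Qed.

Lemma rngf_app x l1 l2 : rngf x (l1 ++ l2) = rngf (rngf x l1) l2.
Proof. revert x; induction l1; intro x; simpl; auto. Qed.

Lemma skipn_prefix (l1 p : list Ed) : skipn (length l1) (l1 ++ p) = p.
Proof. induction l1; simpl; auto. Qed.

Lemma dec_true P : dec P = true -> P.
Proof. unfold dec; destruct (excluded_middle_informative P); congruence. Qed.

Lemma mulraw_valid a b : valid_raw a -> valid_raw b -> valid_raw (mulraw a b).
Proof.
  destruct a as [[u v]|], b as [[w z]|]; simpl; auto.
  intros [Hu [Hv Euv]] [Hw [Hz Ewz]].
  destruct (dec (prefix v w)) eqn:D1.
  - apply dec_true in D1. destruct D1 as [E1 [p Ep]].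
    destruct u as [xu lu], v as [xv lv], w as [xw lw], z as [xz lz].
    unfold valid_path, rng in *; simpl in *. subst xw lw.
    rewrite skipn_prefix.
    apply walk_app in Hw as [_ Hp].
    repeat split; auto.
    + apply walk_app; split; auto. rewrite <- Euv in Hp; auto.
    + unfold rng; simpl. rewrite rngf_app, Euv, <- Ewz, rngf_app; auto.
  - destruct (dec (prefix w v)) eqn:D2; simpl; auto.
    apply dec_true in D2. destruct D2 as [E1 [p Ep]].
    destruct u as [xu lu], v as [xv lv], w as [xw lw], z as [xz lz].
    unfold valid_path, rng in *; simpl in *. subst xv lv.
    rewrite skipn_prefix.
    apply walk_app in Hv as [_ Hp].
    repeat split; auto.
    + apply walk_app; split; auto. rewrite <- Ewz; auto.
    + rewrite Euv, rngf_app, Ewz, rngf_app; auto.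
Qed.

Definition GE : Type := { a : raw | valid_raw a }.

Definition GE_mul (a b : GE) : GE :=
  exist _ (mulraw (proj1_sig a) (proj1_sig b))
          (mulraw_valid _ _ (proj2_sig a) (proj2_sig b)).

End GraphInverseSemigroup.

Section Topology.
Variable X : Type.
Variable O : (X -> Prop) -> Prop.

Definition is_topology : Prop :=
  O (fun _ => True) /\ O (fun _ => False) /\
  (forall U W, O U -> O W -> O (fun x => U x /\ W x)) /\
  (forall (I : Type) (U : I -> X -> Prop), (forall i, O (U i)) ->
      O (fun x => exists i, U i x)).

Definition hausdorff : Prop :=
  forall x y, x <> y -> exists U W, O U /\ O W /\ U x /\ W y /\
                                  (forall z, U z -> W z -> False).

Definition compact : Prop :=
  forall (I : Type) (U : I -> X -> Prop), (forall i, O (U i)) ->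
    (forall x, exists i, U i x) ->
    exists l : list I, forall x, exists i, In i l /\ U i x.

Definition mul_continuous (m : X -> X -> X) : Prop :=
  forall x y W, O W -> W (m x y) ->
    exists U1 U2, O U1 /\ O U2 /\ U1 x /\ U2 y /\
      (forall a b, U1 a -> U2 b -> W (m a b)).

Definition topological_semigroup (m : X -> X -> X) : Prop :=
  is_topology /\ hausdorff /\
  (forall a b c, m a (m b c) = m (m a b) c) /\ mul_continuous m.
End Topology.

Definition embeds_into_compact_semigroup (X : Type) (OX : (X -> Prop) -> Prop)
    (mX : X -> X -> X) : Prop :=
  exists (S : Type) (OS : (S -> Prop) -> Prop) (mS : S -> S -> S) (f : X -> S),
    topological_semigroup OS mS /\ compact OS /\
    (forall x y, f x = f y -> x = y) /\
    (forall x y, f (mX x y) = mS (f x) (f y)) /\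
    (forall W, OS W -> OX (fun x => W (f x))) /\
    (forall U, OX U -> exists W, OS W /\ forall x, U x <-> W (f x)).

(* Main.v *)
Require Import Defs.
From Stdlib Require Import List Classical ClassicalEpsilon ProofIrrelevance.
Import ListNotations.

Definition filt {X : Type} (F : (X -> Prop) -> Prop) : Prop :=
  F (fun _ => True) /\ (forall A B, F A -> (forall x, A x -> B x) -> F B) /\
  (forall A B, F A -> F B -> F (fun x => A x /\ B x)) /\
  (forall A, F A -> exists x, A x).

Definition conv {X T : Type} (OT : (T -> Prop) -> Prop) (F : (X -> Prop) -> Prop)
  (phi : X -> T) (t : T) : Prop :=
  forall W, OT W -> W t -> F (fun x => W (phi x)).

Lemma conv_const {X T : Type} (OT : (T -> Prop) -> Prop) F (phi : X -> T) t c A :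
  hausdorff OT -> filt F -> F A -> (forall x, A x -> phi x = c) -> conv OT F phi t -> t = c.
Proof.
  intros HH [F1 [F2 [F3 F4]]] HA Hc Hconv.
  destruct (classic (t = c)) as [|Hne]; auto.
  destruct (HH t c Hne) as [U [W [OU [OW [Ut [Wc D]]]]]].
  destruct (F4 _ (F3 _ _ HA (Hconv U OU Ut))) as [x [Ax Ux]].
  rewrite Hc in Ux by auto. exfalso; eauto.
Qed.

Lemma conv_unique {X T : Type} (OT : (T -> Prop) -> Prop) F (phi : X -> T) t1 t2 :
  hausdorff OT -> filt F -> conv OT F phi t1 -> conv OT F phi t2 -> t1 = t2.
Proof.
  intros HH [F1 [F2 [F3 F4]]] C1 C2.
  destruct (classic (t1 = t2)) as [|Hne]; auto.
  destruct (HH t1 t2 Hne) as [U [W [OU [OW [Ut [Wc D]]]]]].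
  destruct (F4 _ (F3 _ _ (C1 U OU Ut) (C2 W OW Wc))) as [x [Ux Wx]].
  exfalso; eauto.
Qed.

Lemma conv_ext {X T : Type} (OT : (T -> Prop) -> Prop) F (phi psi : X -> T) t A :
  filt F -> F A -> (forall x, A x -> phi x = psi x) -> conv OT F phi t -> conv OT F psi t.
Proof.
  intros [F1 [F2 [F3 F4]]] HA He C W OW Wt.
  apply (F2 _ _ (F3 _ _ HA (C W OW Wt))).
  intros x [Ax Wx]. rewrite <- He; auto.
Qed.

Lemma conv_avoid {X T : Type} (OT : (T -> Prop) -> Prop) F (phi : X -> T) t c :
  hausdorff OT -> filt F -> conv OT F phi t -> c <> t -> F (fun x => phi x <> c).
Proof.
  intros HH [F1 [F2 [F3 F4]]] C Hne.
  assert (Hne' : t <> c) by congruence.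
  destruct (HH t c Hne') as [U [W [OU [OW [Ut [Wc D]]]]]].
  apply (F2 _ _ (C U OU Ut)). intros x Ux E. rewrite E in Ux. eauto.
Qed.

Lemma conv_mono {X T : Type} (OT : (T -> Prop) -> Prop) (F F' : (X -> Prop) -> Prop) phi t :
  (forall A, F A -> F' A) -> conv OT F phi t -> conv OT F' phi t.
Proof. intros H C W OW Wt; auto. Qed.

Lemma conv_mul {X T : Type} (OT : (T -> Prop) -> Prop) (m : T -> T -> T) F (phi psi : X -> T) a b :
  mul_continuous OT m -> filt F -> conv OT F phi a -> conv OT F psi b ->
  conv OT F (fun x => m (phi x) (psi x)) (m a b).
Proof.
  intros HM [F1 [F2 [F3 F4]]] Ca Cb W OW Wt.
  destruct (HM a b W OW Wt) as [U1 [U2 [O1 [O2 [H1 [H2 H]]]]]].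
  apply (F2 _ _ (F3 _ _ (Ca U1 O1 H1) (Cb U2 O2 H2))).
  intros x [? ?]; auto.
Qed.

Lemma conv_prod {X T : Type} (OT : (T -> Prop) -> Prop) (m : T -> T -> T) F (phi psi : X -> T) a b W :
  mul_continuous OT m -> conv OT F phi a -> conv OT F psi b -> OT W -> W (m a b) ->
  exists A B, F A /\ F B /\ forall x y, A x -> B y -> W (m (phi x) (psi y)).
Proof.
  intros HM Ca Cb OW Wt.
  destruct (HM a b W OW Wt) as [U1 [U2 [O1 [O2 [H1 [H2 H]]]]]].
  exists (fun x => U1 (phi x)), (fun x => U2 (psi x)); repeat split; auto.
Qed.

Lemma filt_list {X : Type} (F : (X -> Prop) -> Prop) (I : Type) (A : I -> X -> Prop) :
  filt F -> (forall i, F (A i)) -> forall l, F (fun x => forall i, In i l -> A i x).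
Proof.
  intros [F1 [F2 [F3 F4]]] HA l; induction l as [|i l IH].
  - apply (F2 _ _ F1). intros x _ i [].
  - apply (F2 _ _ (F3 _ _ (HA i) IH)). intros x [H1 H2] j [<-|Hj]; auto.
Qed.

Lemma refine {X T : Type} (OT : (T -> Prop) -> Prop) (F : (X -> Prop) -> Prop) (phi : X -> T) :
  is_topology OT -> compact OT -> filt F ->
  exists t F', filt F' /\ (forall A, F A -> F' A) /\ conv OT F' phi t.
Proof.
  intros [T1 [T2 [T3 T4]]] HC HF.
  assert (Hcl : exists t, forall W A, OT W -> W t -> F A -> exists x, A x /\ W (phi x)).
  { apply NNPP; intro Hn.
    set (I := { p : (T -> Prop) * (X -> Prop) |
                OT (fst p) /\ F (snd p) /\ forall x, snd p x -> ~ fst p (phi x) }).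
    destruct (HC I (fun i => fst (proj1_sig i))) as [l Hl].
    - intro i; exact (proj1 (proj2_sig i)).
    - intro y. apply NNPP; intro Hy. apply Hn. exists y.
      intros W A OW Wy FA. apply NNPP; intro Hx.
      assert (Hp : OT (fst (W,A)) /\ F (snd (W,A)) /\ forall x, snd (W,A) x -> ~ fst (W,A) (phi x)).
      { simpl; repeat split; auto. intros x Ax Wx; apply Hx; eauto. }
      apply Hy. exists (exist _ (W,A) Hp). exact Wy.
    - destruct HF as [F1 [F2 [F3 F4]]].
      destruct (F4 _ (filt_list F I (fun i : I => snd (proj1_sig i)) (conj F1 (conj F2 (conj F3 F4)))
                  (fun i => proj1 (proj2 (proj2_sig i))) l)) as [x Hx].
      destruct (Hl (phi x)) as [i [Hi Wi]].
      exact (proj2 (proj2 (proj2_sig i)) x (Hx i Hi) Wi). }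
  destruct Hcl as [t Ht].
  destruct HF as [F1 [F2 [F3 F4]]].
  exists t, (fun B => exists A W, F A /\ OT W /\ W t /\ forall x, A x -> W (phi x) -> B x).
  split; [|split].
  - split; [|split; [|split]].
    + exists (fun _ => True), (fun _ => True); repeat split; auto.
    + intros A B [A' [W [HA [OW [Wt H]]]]] HAB. exists A', W; repeat split; auto.
    + intros A B [A1 [W1 [HA1 [OW1 [Wt1 H1]]]]] [A2 [W2 [HA2 [OW2 [Wt2 H2]]]]].
      exists (fun x => A1 x /\ A2 x), (fun y => W1 y /\ W2 y); repeat split; auto.
      all: firstorder.
    + intros A [A' [W [HA [OW [Wt H]]]]].
      destruct (Ht W A' OW Wt HA) as [x [Ax Wx]]; eauto.
  - intros A HA. exists A, (fun _ => True); repeat split; auto.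
  - intros W OW Wt. exists (fun _ => True), W; repeat split; auto.
Qed.


Lemma dec_false P : dec P = false -> ~ P.
Proof. unfold dec; destruct (excluded_middle_informative P); congruence. Qed.

Tactic Notation "dcase" ident(D) := match goal with |- context [dec ?P] =>
  destruct (dec P) eqn:D; [apply dec_true in D | apply dec_false in D] end.
Ltac dcase0 := match goal with |- context [dec ?P] =>
  let D := fresh "D" in destruct (dec P) eqn:D; [apply dec_true in D | apply dec_false in D] end.

Definition vx {V Ed : Type} (x : V) : raw V Ed := Some ((x, []), (x, [])).
Definition pe {V Ed : Type} (r : Ed -> V) (u : path V Ed) : raw V Ed := Some (u, (rng r u, [])).
Definition pi {V Ed : Type} (r : Ed -> V) (u : path V Ed) : raw V Ed := Some ((rng r u, []), u).

Lemma path_eta {V Ed : Type} (u : path V Ed) : (fst u, snd u ++ []) = u.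
Proof. destruct u; simpl; rewrite app_nil_r; auto. Qed.

Lemma mul_vx_same {V Ed : Type} (a : V) : mulraw (vx a) (vx a) = @vx V Ed a.
Proof.
  unfold vx; simpl. dcase0; auto. exfalso; apply D; split; auto; exists []; auto.
Qed.

Lemma mul_vx_diff {V Ed : Type} (a b : V) : a <> b -> mulraw (vx a) (vx b) = (None : raw V Ed).
Proof.
  intro H; unfold vx; simpl. dcase0.
  - destruct D as [E _]; simpl in E; congruence.
  - dcase0; auto. destruct D0 as [E _]; simpl in E; congruence.
Qed.

Lemma skipn_self {A : Type} (l : list A) : skipn (length l) l = [].
Proof. induction l; simpl; auto. Qed.

Lemma pi_pe {V Ed : Type} (r : Ed -> V) (u : path V Ed) : mulraw (pi r u) (pe r u) = vx (rng r u).
Proof.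
  unfold pi, pe, vx; simpl. dcase0.
  - rewrite skipn_self; auto.
  - exfalso; apply D; split; auto; exists []; rewrite app_nil_r; auto.
Qed.

Lemma pe_pi_g {V Ed : Type} (r : Ed -> V) (u v : path V Ed) :
  mulraw (pe r u) (mulraw (pi r u) (Some (u, v))) = Some (u, v).
Proof.
  unfold pi, pe; simpl. dcase0.
  - rewrite skipn_self; simpl. dcase0.
    + simpl. rewrite path_eta; auto.
    + exfalso; apply D0; split; auto; exists []; auto.
  - exfalso; apply D; split; auto; exists []; rewrite app_nil_r; auto.
Qed.

Lemma pi_pe_eq {V Ed : Type} (r : Ed -> V) (u u' : path V Ed) (w : V) :
  mulraw (pi r u) (pe r u') = vx w -> u = u'.
Proof.
  unfold pi, pe, vx; simpl. dcase0.
  - destruct D as [E [p Ep]]. intro H; injection H; intros.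
    rewrite Ep, skipn_prefix in *. subst p.
    destruct u, u'; simpl in *; subst. rewrite app_nil_r; auto.
  - dcase0; [|discriminate].
    destruct D0 as [E [p Ep]]. intro H; injection H; intros.
    rewrite Ep, skipn_prefix in *. subst p.
    destruct u, u'; simpl in *; subst. rewrite app_nil_r; auto.
Qed.

Definition ee {V Ed : Type} (w : V) (e : Ed) : raw V Ed := Some ((w, [e]), (w, [e])).

Lemma vx_sandwich {V Ed : Type} (w : V) (p q : path V Ed) :
  mulraw (mulraw (vx w) (Some (p, q))) (vx w) <> None -> fst p = w /\ fst q = w.
Proof.
  unfold vx; simpl. dcase D1.
  - destruct D1 as [E _]; simpl in E. simpl. dcase D2.
    + destruct D2 as [E' _]; simpl in E'; auto.
    + dcase D3.
      * destruct D3 as [E' _]; simpl in E'; auto.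
      * intro H; exfalso; apply H; auto.
  - dcase D2.
    + exfalso; apply D1. destruct D2 as [E [l Hl]]. split; auto.
      destruct p as [x [|a l']]; simpl in *.
      * exists []; auto.
      * discriminate.
    + intro H; exfalso; apply H; auto.
Qed.

Lemma right_ee {V Ed : Type} (w : V) (e : Ed) (p q : path V Ed) :
  fst q = w -> snd q <> [] -> mulraw (Some (p, q)) (ee w e) = Some (p, q) \/ mulraw (Some (p, q)) (ee w e) = None.
Proof.
  intros Hq Hn. unfold ee; simpl. dcase D1.
  - left. destruct D1 as [E [l Hl]]. destruct q as [x [|a l']]; simpl in *; [congruence|].
    injection Hl; intros Hl2 Ha. destruct l'; [|discriminate]. simpl in Hl2. subst.
    simpl. rewrite path_eta; auto.
  - dcase D2; auto. left. destruct D2 as [E [l Hl]]. destruct q as [x lq]; simpl in *. subst.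
    auto.
Qed.

Lemma left_ee {V Ed : Type} (w : V) (e : Ed) (p q : path V Ed) :
  fst p = w -> snd p <> [] -> mulraw (ee w e) (Some (p, q)) = Some (p, q) \/ mulraw (ee w e) (Some (p, q)) = None.
Proof.
  intros Hp Hn. unfold ee; simpl. dcase D1.
  - left. destruct D1 as [E [l Hl]]. destruct p as [x lp]; simpl in *. subst; simpl; auto.
  - dcase D2; auto. left. destruct D2 as [E [l Hl]]. destruct p as [x [|a l']]; simpl in *; [congruence|].
    injection Hl; intros Hl2 Ha. destruct l'; [|discriminate]. simpl in Hl2. subst.
    simpl. rewrite path_eta; auto.
Qed.

Lemma vx_ee {V Ed : Type} (w : V) (e : Ed) : mulraw (vx w) (ee w e) = ee w e.
Proof.
  unfold vx, ee; simpl. dcase D1; auto. exfalso; apply D1; split; auto; exists [e]; auto.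
Qed.

Lemma ee_vx {V Ed : Type} (w : V) (e : Ed) : mulraw (ee w e) (vx w) = ee w e.
Proof.
  unfold vx, ee; simpl. dcase D1.
  - destruct D1 as [_ [l Hl]]; discriminate.
  - dcase D2; auto. exfalso; apply D2; split; auto; exists [e]; auto.
Qed.


Definition mk {V Ed : Type} (s r : Ed -> V) (a : raw V Ed) : GE s r :=
  match excluded_middle_informative (valid_raw s r a) with
  | left H => exist _ a H
  | right _ => exist _ None I
  end.

Lemma mk_val {V Ed : Type} (s r : Ed -> V) a : valid_raw s r a -> proj1_sig (mk s r a) = a.
Proof. unfold mk; destruct (excluded_middle_informative _); simpl; tauto. Qed.

Lemma GE_ext {V Ed : Type} (s r : Ed -> V) (g h : GE s r) : proj1_sig g = proj1_sig h -> g = h.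
Proof.
  destruct g as [a Ha], h as [b Hb]; simpl; intro E; subst. f_equal; apply proof_irrelevance.
Qed.

Lemma valid_vx {V Ed : Type} (s r : Ed -> V) w : valid_raw s r (vx w).
Proof. unfold vx; simpl; unfold valid_path, rng; simpl; auto. Qed.

Lemma valid_ee {V Ed : Type} (s r : Ed -> V) w e : s e = w -> valid_raw s r (ee w e).
Proof. unfold ee; simpl; unfold valid_path, rng; simpl; auto. Qed.

Lemma valid_pe {V Ed : Type} (s r : Ed -> V) u : valid_path s r u -> valid_raw s r (pe r u).
Proof. unfold pe; simpl; unfold valid_path, rng; simpl; auto. Qed.

Lemma valid_pi {V Ed : Type} (s r : Ed -> V) u : valid_path s r u -> valid_raw s r (pi r u).
Proof. unfold pi; simpl; unfold valid_path, rng; simpl; auto. Qed.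

Definition zeroG {V Ed : Type} (s r : Ed -> V) : GE s r := exist _ None I.

Lemma vertex_isolated {V Ed : Type} (s r : Ed -> V) (S : Type) (OS : (S -> Prop) -> Prop)
  (mS : S -> S -> S) (f : GE s r -> S) (w : V) :
  topological_semigroup OS mS -> (forall x y, f x = f y -> x = y) ->
  (forall x y, f (GE_mul x y) = mS (f x) (f y)) ->
  exists N, OS N /\ N (f (mk s r (vx w))) /\ forall g, N (f g) -> proj1_sig g = vx w.
Proof.
  intros [[T1 [T2 [T3 T4]]] [HH [Hass HM]]] Hinj Hhom.
  set (A := mk s r (vx w)).
  assert (HA : proj1_sig A = vx w) by (apply mk_val, valid_vx).
  set (a := f A). set (o := f (zeroG s r)).
  assert (Hao : a <> o).
  { intro E; apply Hinj in E. apply (f_equal (@proj1_sig _ _)) in E. rewrite HA in E. discriminate. }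
  assert (HAA : GE_mul A A = A).
  { apply GE_ext. simpl. rewrite HA. apply mul_vx_same. }
  destruct (HH a o Hao) as [Ua [Uo [OUa [OUo [Uaa [Uoo Dao]]]]]].
  assert (Haaa : Ua (mS (mS a a) a)).
  { unfold a. rewrite <- !Hhom, !HAA. exact Uaa. }
  destruct (HM _ _ Ua OUa Haaa) as [U1 [U2 [O1 [O2 [H1 [H2 H12]]]]]].
  destruct (HM _ _ U1 O1 H1) as [U3 [U4 [O3 [O4 [H3 [H4 H34]]]]]].
  assert (Hsand : forall g, U4 (f g) -> exists p q, proj1_sig g = Some (p, q) /\ fst p = w /\ fst q = w).
  { intros g Hg.
    assert (Hx : Ua (f (GE_mul (GE_mul A g) A))).
    { rewrite !Hhom. apply H12; auto. }
    assert (Hnz : proj1_sig (GE_mul (GE_mul A g) A) <> None).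
    { intro E. assert (GE_mul (GE_mul A g) A = zeroG s r) by (apply GE_ext; exact E).
      rewrite H in Hx. eauto. }
    simpl in Hnz. rewrite HA in Hnz.
    destruct g as [[[p q]|] Hg']; simpl in Hnz.
    - exists p, q; split; auto. apply vx_sandwich; auto.
    - exfalso; apply Hnz; auto. }
  destruct (classic (exists e, s e = w)) as [[e He]|Hne].
  2:{ exists U4; split; auto; split; [exact H4|].
      intros g Hg. destruct (Hsand g Hg) as [p [q [Eg [Ep Eq]]]].
      destruct g as [a0 Hv]; simpl in Eg |- *; subst a0. clear Hg. destruct Hv as [Vp [Vq _]].
      destruct p as [x [|e l]], q as [y [|e' l']]; simpl in *; subst;
        try (destruct Vp as [Ve _]; exfalso; apply Hne; eexists; exact Ve); try (destruct Vq as [Ve _]; exfalso; apply Hne; eexists; exact Ve); auto. }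
  set (B := mk s r (ee w e)).
  assert (HB : proj1_sig B = ee w e) by (apply mk_val, valid_ee; auto).
  set (b := f B).
  assert (Hab : a <> b).
  { intro E; apply Hinj in E. apply (f_equal (@proj1_sig _ _)) in E. rewrite HA, HB in E. discriminate. }
  assert (Hbo : b <> o).
  { intro E; apply Hinj in E. apply (f_equal (@proj1_sig _ _)) in E. rewrite HB in E. discriminate. }
  destruct (HH a b Hab) as [Va [Vb [OVa [OVb [Vaa [Vbb Dab]]]]]].
  destruct (HH b o Hbo) as [Wb [Wo [OWb [OWo [Wbb [Woo Dbo]]]]]].
  assert (HAB : GE_mul A B = B) by (apply GE_ext; simpl; rewrite HA, HB; apply vx_ee).
  assert (HBA : GE_mul B A = B) by (apply GE_ext; simpl; rewrite HA, HB; apply ee_vx).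
  assert (Wab : Vb (mS a b) /\ Wb (mS a b)).
  { unfold a, b; rewrite <- Hhom, HAB; auto. }
  assert (Wba : Vb (mS b a) /\ Wb (mS b a)).
  { unfold a, b; rewrite <- Hhom, HBA; auto. }
  destruct (HM _ _ (fun t => Vb t /\ Wb t) (T3 _ _ OVb OWb) Wab) as [R1 [R2 [OR1 [OR2 [HR1 [HR2 HR]]]]]].
  destruct (HM _ _ (fun t => Vb t /\ Wb t) (T3 _ _ OVb OWb) Wba) as [L1 [L2 [OL1 [OL2 [HL1 [HL2 HL]]]]]].
  exists (fun t => (U4 t /\ R1 t) /\ (L2 t /\ Va t)).
  split; [apply T3; apply T3; auto|]. split; [repeat split; auto|].
  intros g [[G4 GR] [GL Ga]].
  destruct (Hsand g G4) as [p [q [Eg [Ep Eq]]]].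
  assert (Hq : snd q = []).
  { destruct (classic (snd q = [])) as [|Hn]; auto. exfalso.
    assert (Hx : Vb (f (GE_mul g B)) /\ Wb (f (GE_mul g B))) by (rewrite Hhom; apply (HR _ _ GR HR2)).
    destruct (right_ee w e p q Eq Hn) as [E|E].
    - assert (GE_mul g B = g) by (apply GE_ext; simpl; rewrite Eg, HB; exact E).
      rewrite H in Hx. destruct Hx; eauto.
    - assert (GE_mul g B = zeroG s r) by (apply GE_ext; simpl; rewrite Eg, HB; exact E).
      rewrite H in Hx. destruct Hx; eauto. }
  assert (Hp : snd p = []).
  { destruct (classic (snd p = [])) as [|Hn]; auto. exfalso.
    assert (Hx : Vb (f (GE_mul B g)) /\ Wb (f (GE_mul B g))) by (rewrite Hhom; apply (HL _ _ HL1 GL)).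
    destruct (left_ee w e p q Ep Hn) as [E|E].
    - assert (GE_mul B g = g) by (apply GE_ext; simpl; rewrite Eg, HB; exact E).
      rewrite H in Hx. destruct Hx; eauto.
    - assert (GE_mul B g = zeroG s r) by (apply GE_ext; simpl; rewrite Eg, HB; exact E).
      rewrite H in Hx. destruct Hx; eauto. }
  rewrite Eg. destruct p as [x l], q as [y l']; simpl in *; subst; auto.
Qed.



Definition Upe {V Ed : Type} {s r : Ed -> V} (g : GE s r) : raw V Ed :=
  match proj1_sig g with Some (u, _) => pe r u | None => None end.
Definition Upi {V Ed : Type} {s r : Ed -> V} (g : GE s r) : raw V Ed :=
  match proj1_sig g with Some (u, _) => pi r u | None => None end.
Definition Vpe {V Ed : Type} {s r : Ed -> V} (g : GE s r) : raw V Ed :=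
  match proj1_sig g with Some (_, v) => pe r v | None => None end.
Definition Vpi {V Ed : Type} {s r : Ed -> V} (g : GE s r) : raw V Ed :=
  match proj1_sig g with Some (_, v) => pi r v | None => None end.

Lemma split_nz {V Ed : Type} {s r : Ed -> V} (g : GE s r) : proj1_sig g <> None ->
  exists u v, proj1_sig g = Some (u, v) /\ valid_path s r u /\ valid_path s r v /\ rng r u = rng r v.
Proof.
  destruct g as [[[u v]|] Hg]; simpl; intro H; [|congruence].
  exists u, v; destruct Hg as [? [? ?]]; auto.
Qed.

Lemma mul_val {V Ed : Type} {s r : Ed -> V} (g h : GE s r) :
  proj1_sig (GE_mul g h) = mulraw (proj1_sig g) (proj1_sig h).
Proof. reflexivity. Qed.


Lemma K_vert {V Ed : Type} {s r : Ed -> V} (g : GE s r) u v :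
  proj1_sig g = Some (u, v) -> valid_path s r u ->
  GE_mul (mk s r (Upi g)) (mk s r (Upe g)) = mk s r (vx (rng r u)).
Proof.
  intros E Vu. apply GE_ext. rewrite mul_val. unfold Upi, Upe; rewrite E.
  rewrite !mk_val; [apply pi_pe| apply valid_vx | apply valid_pe; auto | apply valid_pi; auto].
Qed.

Lemma K_vert' {V Ed : Type} {s r : Ed -> V} (g : GE s r) u v :
  proj1_sig g = Some (u, v) -> valid_path s r v ->
  GE_mul (mk s r (Vpi g)) (mk s r (Vpe g)) = mk s r (vx (rng r v)).
Proof.
  intros E Vv. apply GE_ext. rewrite mul_val. unfold Vpi, Vpe; rewrite E.
  rewrite !mk_val; [apply pi_pe| apply valid_vx | apply valid_pe; auto | apply valid_pi; auto].
Qed.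

Lemma K_g {V Ed : Type} {s r : Ed -> V} (g : GE s r) u v :
  proj1_sig g = Some (u, v) -> valid_path s r u ->
  GE_mul (mk s r (Upe g)) (GE_mul (mk s r (Upi g)) g) = g.
Proof.
  intros E Vu. apply GE_ext. rewrite !mul_val. unfold Upi, Upe; rewrite E.
  rewrite !mk_val; [apply pe_pi_g | apply valid_pi; auto | apply valid_pe; auto].
Qed.

Lemma K_vv_same {V Ed : Type} {s r : Ed -> V} (a : V) :
  GE_mul (mk s r (vx a)) (mk s r (vx a)) = mk s r (vx a).
Proof.
  apply GE_ext. rewrite mul_val. rewrite !mk_val by apply valid_vx. apply mul_vx_same.
Qed.

Lemma K_vv_diff {V Ed : Type} {s r : Ed -> V} (a b : V) : a <> b ->
  GE_mul (mk s r (vx a)) (mk s r (vx b)) = zeroG s r.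
Proof.
  intro H. apply GE_ext. rewrite mul_val. rewrite !mk_val by apply valid_vx. apply mul_vx_diff; auto.
Qed.

Lemma K_uu {V Ed : Type} {s r : Ed -> V} (g h : GE s r) u v u' v' w :
  proj1_sig g = Some (u, v) -> valid_path s r u ->
  proj1_sig h = Some (u', v') -> valid_path s r u' ->
  proj1_sig (GE_mul (mk s r (Upi g)) (mk s r (Upe h))) = vx w -> u = u'.
Proof.
  intros E Vu E' Vu'. rewrite mul_val. unfold Upi, Upe; rewrite E, E'.
  rewrite !mk_val by (first [apply valid_pe | apply valid_pi]; auto). apply pi_pe_eq.
Qed.

Lemma K_vv' {V Ed : Type} {s r : Ed -> V} (g h : GE s r) u v u' v' w :
  proj1_sig g = Some (u, v) -> valid_path s r v ->
  proj1_sig h = Some (u', v') -> valid_path s r v' ->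
  proj1_sig (GE_mul (mk s r (Vpi g)) (mk s r (Vpe h))) = vx w -> v = v'.
Proof.
  intros E Vv E' Vv'. rewrite mul_val. unfold Vpi, Vpe; rewrite E, E'.
  rewrite !mk_val by (first [apply valid_pe | apply valid_pi]; auto). apply pi_pe_eq.
Qed.

Lemma closure_image {V Ed : Type} (s r : Ed -> V) (S : Type) (OS : (S -> Prop) -> Prop)
  (mS : S -> S -> S) (f : GE s r -> S) :
  topological_semigroup OS mS -> compact OS -> (forall x y, f x = f y -> x = y) ->
  (forall x y, f (GE_mul x y) = mS (f x) (f y)) ->
  forall x, (forall W, OS W -> W x -> exists g, W (f g)) -> exists g, f g = x.
Proof.
  intros HTS HC Hinj Hhom x Hcl.
  pose proof HTS as [[T1 [T2 [T3 T4]]] [HH [Hass HM]]].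
  apply NNPP; intro Hn. assert (Hx : forall g, f g <> x) by (intros g E; apply Hn; eauto). clear Hn.
  set (o := f (zeroG s r)).
  set (cl := fun t => forall W, OS W -> W t -> exists g, W (f g)).
  assert (Zl : forall t, cl t -> mS o t = o).
  { intros t Ht. apply NNPP; intro Hne.
    destruct (HH _ _ Hne) as [U [U' [OU [OU' [Ut [Uo D]]]]]].
    destruct (HM _ _ U OU Ut) as [U1 [U2 [O1 [O2 [H1 [H2 H12]]]]]].
    destruct (Ht U2 O2 H2) as [g Hg].
    assert (E : GE_mul (zeroG s r) g = zeroG s r) by (apply GE_ext; reflexivity).
    specialize (H12 _ _ H1 Hg). unfold o in *. rewrite <- Hhom, E in H12. eauto. }
  assert (Zr : forall t, cl t -> mS t o = o).
  { intros t Ht. apply NNPP; intro Hne.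
    destruct (HH _ _ Hne) as [U [U' [OU [OU' [Ut [Uo D]]]]]].
    destruct (HM _ _ U OU Ut) as [U1 [U2 [O1 [O2 [H1 [H2 H12]]]]]].
    destruct (Ht U1 O1 H1) as [g Hg].
    assert (E : GE_mul g (zeroG s r) = zeroG s r).
    { apply GE_ext. simpl. destruct (proj1_sig g) as [[? ?]|]; reflexivity. }
    specialize (H12 _ _ Hg H2). unfold o in *. rewrite <- Hhom, E in H12. eauto. }
  assert (Cm : forall a b, cl a -> cl b -> cl (mS a b)).
  { intros a b Ha Hb W OW Wab.
    destruct (HM _ _ W OW Wab) as [U1 [U2 [O1 [O2 [H1 [H2 H12]]]]]].
    destruct (Ha U1 O1 H1) as [g Hg]. destruct (Hb U2 O2 H2) as [h Hh].
    exists (GE_mul g h). rewrite Hhom; auto. }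
  assert (Cc : forall (F : (GE s r -> Prop) -> Prop) phi t, filt F -> conv OS F (fun g => f (phi g)) t -> cl t).
  { intros F phi t [F1 [F2 [F3 F4]]] Hc W OW Wt. destruct (F4 _ (Hc W OW Wt)) as [g Hg]; eauto. }
  set (F0 := fun (A : GE s r -> Prop) => exists W, OS W /\ W x /\ forall g, W (f g) -> A g).
  assert (HF0 : filt F0).
  { split; [|split; [|split]].
    - exists (fun _ => True); repeat split; auto.
    - intros A B [W [OW [Wx H]]] HAB; exists W; repeat split; auto.
    - intros A B [W1 [OW1 [Wx1 H1]]] [W2 [OW2 [Wx2 H2]]].
      exists (fun t => W1 t /\ W2 t); split; [apply T3; auto|split; [split; auto|]]. intros g0 [Hg1 Hg2]; split; auto.
    - intros A [W [OW [Wx H]]]. destruct (Hcl W OW Wx) as [g Hg]; eauto. }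
  assert (Cf0 : conv OS F0 f x) by (intros W OW Wx; exists W; repeat split; auto).
  assert (Hxo : o <> x) by apply Hx.
  assert (NZ0 : F0 (fun g => proj1_sig g <> None)).
  { destruct HF0 as [F1 [F2 [F3 F4]]].
    apply (F2 _ _ (conv_avoid OS F0 f x o HH (conj F1 (conj F2 (conj F3 F4))) Cf0 Hxo)).
    intros g Hg E. apply Hg. unfold o; f_equal. apply GE_ext; exact E. }
  destruct (refine OS F0 (fun g => f (mk s r (Upe g))) (conj T1 (conj T2 (conj T3 T4))) HC HF0)
    as [p [F1 [HF1 [S1 Cp]]]].
  destruct (refine OS F1 (fun g => f (mk s r (Upi g))) (conj T1 (conj T2 (conj T3 T4))) HC HF1)
    as [q [F2 [HF2 [S2 Cq]]]].
  destruct (refine OS F2 (fun g => f (mk s r (Vpe g))) (conj T1 (conj T2 (conj T3 T4))) HC HF2)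
    as [p' [F3 [HF3 [S3 Cp']]]].
  destruct (refine OS F3 (fun g => f (mk s r (Vpi g))) (conj T1 (conj T2 (conj T3 T4))) HC HF3)
    as [q' [F [HF [S4 Cq']]]].
  assert (Sub : forall A, F0 A -> F A) by auto.
  apply (conv_mono OS _ F) in Cp; auto. apply (conv_mono OS _ F) in Cq; auto.
  apply (conv_mono OS _ F) in Cp'; auto. apply (conv_mono OS _ F) in Cf0; auto.
  assert (NZ := Sub _ NZ0).
  clear S1 S2 S3 S4 HF1 HF2 HF3 F1 F2 F3.
  set (PU := fun g => f (mk s r (Upe g))) in *.
  set (QU := fun g => f (mk s r (Upi g))) in *.
  set (PV := fun g => f (mk s r (Vpe g))) in *.
  set (QV := fun g => f (mk s r (Vpi g))) in *.
  assert (Cz : conv OS F (fun g => mS (QU g) (PU g)) (mS q p)) by (apply conv_mul; auto).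
  assert (Cz' : conv OS F (fun g => mS (QV g) (PV g)) (mS q' p')) by (apply conv_mul; auto).
  assert (Ez : mS q' p' = mS q p).
  { apply (conv_unique OS F (fun g => mS (QU g) (PU g))); auto.
    apply (conv_ext OS F (fun g => mS (QV g) (PV g)) _ _ _ HF NZ); [|exact Cz'].
    intros g Hg. destruct (split_nz g Hg) as [u [v [E [Vu [Vv Er]]]]].
    unfold QU, PU, QV, PV. rewrite <- !Hhom, (K_vert g u v E Vu), (K_vert' g u v E Vv), Er; auto. }
  assert (Ex : mS p (mS q x) = x).
  { apply (conv_unique OS F f); auto.
    apply (conv_ext OS F (fun g => mS (PU g) (mS (QU g) (f g))) f _ _ HF NZ).
    - intros g Hg. destruct (split_nz g Hg) as [u [v [E [Vu [Vv Er]]]]].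
      unfold QU, PU. rewrite <- !Hhom, (K_g g u v E Vu); auto.
    - apply conv_mul; auto. apply conv_mul; auto. }
  assert (clp : cl p) by (apply (Cc F (fun g => mk s r (Upe g)) p HF Cp)).
  assert (clq : cl q) by (apply (Cc F (fun g => mk s r (Upi g)) q HF Cq)).
  assert (clx : cl x) by (apply (Cc F (fun g => g) x HF Cf0)).
  assert (Hz0 : mS q p <> o).
  { intro E. apply (Hx (zeroG s r)). fold o.
    assert (E2 : x = mS p (mS q (mS p (mS q x)))) by (rewrite !Ex; auto).
    rewrite (Hass q p (mS q x)) in E2. rewrite E, Zl in E2 by (apply Cm; auto). rewrite Zr in E2 by auto.
    auto. }
  assert (Hzz : mS (mS q p) (mS q p) = mS q p).
  { apply (conv_unique OS F (fun g => mS (QU g) (PU g))); auto.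
    apply (conv_ext OS F (fun g => mS (mS (QU g) (PU g)) (mS (QU g) (PU g))) _ _ _ HF NZ).
    - intros g Hg. destruct (split_nz g Hg) as [u [v [E [Vu [Vv Er]]]]].
      unfold QU, PU. rewrite <- !Hhom, (K_vert g u v E Vu), K_vv_same; auto.
    - apply conv_mul; auto. }
  pose proof HF as [FF1 [FF2 [FF3 FF4]]].
  assert (Hw : exists w, mS q p = f (mk s r (vx w))).
  { apply NNPP; intro Hnw. apply Hz0.
    apply NNPP; intro Hne. rewrite <- Hzz in Hne.
    destruct (HH _ _ Hne) as [U [U' [OU [OU' [Ut [Uo D]]]]]].
    destruct (conv_prod OS mS F _ _ _ _ U HM Cz Cz OU Ut) as [A [B [FA [FB HAB]]]].
    destruct (FF4 _ (FF3 _ _ FA NZ)) as [g [Ag Ng]].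
    destruct (split_nz g Ng) as [u [v [E [Vu [Vv Er]]]]].
    assert (Fav : F (fun h => mS (QU h) (PU h) <> f (mk s r (vx (rng r u))))).
    { apply (conv_avoid OS F _ (mS q p)); auto. intro E'; apply Hnw; eauto. }
    destruct (FF4 _ (FF3 _ _ (FF3 _ _ FB NZ) Fav)) as [h [[Bh Nh] Hh]].
    destruct (split_nz h Nh) as [u' [v' [E' [Vu' [Vv' Er']]]]].
    specialize (HAB g h Ag Bh). unfold QU, PU in HAB, Hh. cbv beta in HAB, Hh.
    rewrite <- !Hhom in HAB. rewrite (K_vert g u v E Vu), (K_vert h u' v' E' Vu') in HAB.
    rewrite <- Hhom, (K_vert h u' v' E' Vu') in Hh.
    assert (Hd : rng r u <> rng r u') by (intro Hq; apply Hh; rewrite Hq; auto).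
    rewrite K_vv_diff in HAB by auto. eapply D; eauto. }
  destruct Hw as [w Hw].
  destruct (vertex_isolated s r S OS mS f w HTS Hinj Hhom) as [N [ON [Nz HN]]].
  rewrite <- Hw in Nz.
  destruct (conv_prod OS mS F _ _ _ _ N HM Cq Cp ON Nz) as [A [B [FA [FB HAB]]]].
  rewrite <- Ez in Nz.
  destruct (conv_prod OS mS F _ _ _ _ N HM Cq' Cp' ON Nz) as [A' [B' [FA' [FB' HAB']]]].
  set (C := fun g => ((A g /\ B g) /\ (A' g /\ B' g)) /\ proj1_sig g <> None).
  assert (FC : F C) by (unfold C; auto).
  destruct (FF4 _ FC) as [g0 Cg0].
  assert (Hall : forall h, C h -> f h = f g0).
  { intros h Ch. f_equal.
    destruct Cg0 as [[[Ag0 Bg0] [A'g0 B'g0]] Ng0]. destruct Ch as [[[Ah Bh] [A'h B'h]] Nh].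
    destruct (split_nz g0 Ng0) as [u [v [E [Vu [Vv Er]]]]].
    destruct (split_nz h Nh) as [u' [v' [E' [Vu' [Vv' Er']]]]].
    apply GE_ext. rewrite E, E'.
    assert (H1 := HAB g0 h Ag0 Bh). assert (H2 := HAB' g0 h A'g0 B'h).
    unfold QU, PU, QV, PV in H1, H2. cbv beta in H1, H2. rewrite <- Hhom in H1, H2.
    apply HN in H1. apply HN in H2.
    rewrite (K_uu g0 h u v u' v' w E Vu E' Vu' H1), (K_vv' g0 h u v u' v' w E Vv E' Vv' H2). auto. }
  apply (Hx g0). symmetry.
  apply (conv_const OS F f x (f g0) C HH HF FC Hall Cf0).
Qed.

Theorem corollary5p1 (V Ed : Type) (s r : Ed -> V)
    (O : (GE s r -> Prop) -> Prop)
    (HO : topological_semigroup O (@GE_mul V Ed s r)) :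
  embeds_into_compact_semigroup O (@GE_mul V Ed s r) <-> compact O.
Proof.
  split.
  - intros [S [OS [mS [f [HTS [HC [Hinj [Hhom [Hcont Hsub]]]]]]]]].
    pose proof HTS as [[T1 [T2 [T3 T4]]] _].
    intros I U HU Hcov.
    set (Wf := fun i t => exists k : {W : S -> Prop | OS W /\ forall g, U i g <-> W (f g)}, proj1_sig k t).
    set (K := fun t => exists k : {W : S -> Prop | OS W /\ forall g, ~ W (f g)}, proj1_sig k t).
    set (fam := fun o : option I => match o with Some i => Wf i | None => K end).
    destruct (HC (option I) fam) as [l Hl].
    + intros [i|]; simpl.
      * apply (T4 _ (fun k : {W : S -> Prop | OS W /\ forall g, U i g <-> W (f g)} => proj1_sig k)).
        intro k; exact (proj1 (proj2_sig k)).
      * apply (T4 _ (fun k : {W : S -> Prop | OS W /\ forall g, ~ W (f g)} => proj1_sig k)).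
        intro k; exact (proj1 (proj2_sig k)).
    + intro t. destruct (classic (forall W, OS W -> W t -> exists g, W (f g))) as [Hc|Hc].
      * destruct (closure_image s r S OS mS f HTS HC Hinj Hhom t Hc) as [g Hg].
        destruct (Hcov g) as [i Hi]. destruct (Hsub (U i) (HU i)) as [W [OW HW]].
        exists (Some i). simpl. exists (exist _ W (conj OW HW)). simpl. rewrite <- Hg. apply HW; auto.
      * assert (exists W, OS W /\ W t /\ forall g, ~ W (f g)) as [W [OW [Wt HW]]].
        { apply NNPP; intro Hn; apply Hc. intros W OW Wt. apply NNPP; intro Hg.
          apply Hn. exists W; repeat split; auto. intros g Wg; apply Hg; eauto. }
        exists None. simpl. exists (exist _ W (conj OW HW)). exact Wt.
    + exists (flat_map (fun o => match o with Some i => [i] | None => [] end) l).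
      intro g. destruct (Hl (f g)) as [[i|] [Ho Hf]]; simpl in Hf.
      * destruct Hf as [k Hk]. exists i. split.
        -- apply in_flat_map. exists (Some i). simpl; auto.
        -- apply (proj2 (proj2_sig k) g); exact Hk.
      * destruct Hf as [k Hk]. exfalso; exact (proj2 (proj2_sig k) g Hk).
  - intro HC. exists (GE s r), O, (@GE_mul V Ed s r), (fun g => g).
    split; [exact HO|]. split; [exact HC|]. split; [auto|]. split; [auto|]. split.
    + intros W HW; exact HW.
    + intros U HU; exists U; split; [exact HU|]. intro x; tauto.
Qed.
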